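(* Let $K$ be a field of characteristic zero and $W_n$ the Witt Lie algebra. The set of locally finite elements of $W_n$ that are homogeneous with respect to the $\mathbb{Z}^n$-grading $W_n=\bigoplus_{\alpha\in\mathbb{Z}^n}x^\alpha\mathcal{H}_n$ equals $\mathcal{H}_n$.
   Context: $W_n=\mathrm{Der}_K(K[x_1^{\pm1},\ldots,x_n^{\pm1}])$, $x^\alpha=x_1^{\alpha_1}\cdots x_n^{\alpha_n}$, $\mathcal{H}_n=\bigoplus_{i=1}^nKH_i$ with $H_i=x_i\partial_i$; homogeneous elements are those lying in some $x^\alpha\mathcal{H}_n$. An element $a$ is locally finite if $\dim_K\sum_{i\ge0}K\,\mathrm{ad}(a)^i(b)<\infty$ for all $b\in W_n$. *)

(* Defs.v *)
(* Laurent polynomials K[x_1^{±1},...,x_n^{±1}] are modelled as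
   finitely supported functions from exponent vectors 'rV[int]_n to K
   (multinomials' {malg K['rV[int]_n]}), with the Laurent product defined below. *)
From HB Require Import structures.
From mathcomp Require Import all_boot all_order all_algebra.
From mathcomp Require Import finmap.
From mathcomp.multinomials Require Import monalg.
Set Implicit Arguments. Unset Strict Implicit. Unset Printing Implicit Defensive.
Import Order.TTheory GRing.Theory Num.Theory.
Local Open Scope ring_scope.

Definition laurent (n : nat) (K : fieldType) := {malg K['rV[int]_n]}.

Definition lmono (n : nat) (K : fieldType) (m : 'rV[int]_n) : laurent n K :=
  << m >>.

Definition lmul (n : nat) (K : fieldType) (f g : laurent n K) : laurent n K :=
  \sum_(m <- msupp f) \sum_(m' <- msupp g) (f@_m * g@_m') *: lmono K (m + m').

(* D is a K-derivation of the Laurent polynomial ring: K-linear + Leibniz.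
   W_n = Der_K(L_n) is the set of such maps. *)
Definition is_derivation (n : nat) (K : fieldType) (D : laurent n K -> laurent n K) :=
  (forall (c : K) (f g : laurent n K), D (c *: f + g) = c *: D f + D g) /\
  (forall f g : laurent n K, D (lmul f g) = lmul f (D g) + lmul (D f) g).

(* H_i = x_i d/dx_i :  x^m |-> m_i x^m. *)
Definition Hop (n : nat) (K : fieldType) (i : 'I_n) (f : laurent n K) : laurent n K :=
  \sum_(m <- msupp f) (((m ord0 i)%:~R : K) * f@_m) *: lmono K m.

Definition ad (n : nat) (K : fieldType) (a b : laurent n K -> laurent n K) :
  laurent n K -> laurent n K := fun f => a (b f) - b (a f).

(* a is locally finite: for every b in W_n, the span of {ad(a)^k b | k >= 0}
   is finite dimensional, i.e. contained in the span of finitely many maps. *)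
Definition locally_finite (n : nat) (K : fieldType) (a : laurent n K -> laurent n K) :=
  forall b : laurent n K -> laurent n K, is_derivation b ->
    exists (d : nat) (S : 'I_d -> laurent n K -> laurent n K),
      forall k : nat, exists lam : 'I_d -> K,
        forall f, iter k (ad a) b f = \sum_(j < d) lam j *: S j f.

Definition homogeneous (n : nat) (K : fieldType) (a : laurent n K -> laurent n K) :=
  exists (alpha : 'rV[int]_n) (c : 'I_n -> K),
    forall f, a f = \sum_(i < n) c i *: lmul (lmono K alpha) (Hop i f).

Definition in_Hn (n : nat) (K : fieldType) (a : laurent n K -> laurent n K) :=
  exists c : 'I_n -> K, forall f, a f = \sum_(i < n) c i *: Hop i f.

(* Main.v *)
Require Import Defs.
From HB Require Import structures.
From mathcomp Require Import all_boot all_order all_algebra.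
From mathcomp Require Import finmap.
From mathcomp.multinomials Require Import monalg.
From mathcomp Require Import ring.
Set Implicit Arguments. Unset Strict Implicit. Unset Printing Implicit Defensive.
Import Order.TTheory GRing.Theory Num.Theory.
Local Open Scope ring_scope.
Section Basics.
Variables (n : nat) (K : fieldType).
Local Notation M := 'rV[int]_n.
Local Notation L := (laurent n K).

Lemma sum_pick (s : seq M) (F : M -> K) q : uniq s -> (F q != 0 -> q \in s) ->
  \sum_(m <- s) F m * (m == q)%:R = F q.
Proof.
move=> us hq.
have -> : \sum_(m <- s) F m * (m == q)%:R = \sum_(m <- s | m == q) F m.
  rewrite [RHS]big_mkcond /=; apply: eq_bigr => m _.
  by case: eqP => _; rewrite ?mulr1 ?mulr0.
case qs: (q \in s).
  by rewrite -big_filter filter_pred1_uniq // big_seq1.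
rewrite big1_seq; last by move=> m /andP[/eqP -> ]; rewrite qs.
by case: (F q =P 0) => [->//|/eqP /hq]; rewrite qs.
Qed.

Lemma lmonoE (m p : M) : (lmono K m)@_p = (m == p)%:R.
Proof. by rewrite /lmono mcoeffU. Qed.

Lemma coef_sum (I : Type) (r : seq I) (P : pred I) (F : I -> L) p :
  (\sum_(i <- r | P i) F i)@_p = \sum_(i <- r | P i) (F i)@_p.
Proof. by rewrite raddf_sum. Qed.

Lemma lmulE (f g : L) p :
  (lmul f g)@_p = \sum_(m <- msupp f) f@_m * g@_(p - m).
Proof.
rewrite /lmul coef_sum; apply: eq_bigr => m _.
rewrite coef_sum.
under eq_bigr => m' _ do rewrite mcoeffZ lmonoE -mulrA.
have -> : \sum_(i <- msupp g) f@_m * (g@_i * (m + i == p)%:R) =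
          \sum_(i <- msupp g) (f@_m * g@_i) * (i == p - m)%:R.
  apply: eq_bigr => i _; rewrite mulrA; congr (_ * _%:R).
  by rewrite (eq_sym i) subr_eq addrC eq_sym.
rewrite (sum_pick (F := fun i => f@_m * g@_i)) ?fset_uniq //.
by apply: contraR => /mcoeff_outdom ->; rewrite mulr0.
Qed.

Lemma conv (s t : seq M) (F G : M -> K) r : uniq s -> uniq t ->
  (forall m, F m != 0 -> m \in s) -> (forall m, G m != 0 -> m \in t) ->
  \sum_(m <- s) F m * G (r - m) = \sum_(m <- t) F (r - m) * G m.
Proof.
move=> us ut hF hG.
have -> : \sum_(m <- s) F m * G (r - m) =
   \sum_(m <- s) \sum_(m' <- t) F m * (G m' * (m' == r - m)%:R).
  apply: eq_bigr => m _; rewrite -mulr_sumr (sum_pick (F := G)) //.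
  exact: hG.
have -> : \sum_(m <- t) F (r - m) * G m =
   \sum_(m' <- t) \sum_(m <- s) (F m * (m == r - m')%:R) * G m'.
  apply: eq_bigr => m _; rewrite -mulr_suml (sum_pick (F := F)) //.
  exact: hF.
rewrite exchange_big /=; apply: eq_bigr => m' _; apply: eq_bigr => m _.
have -> : (m' == r - m) = (m == r - m') by rewrite eq_sym subr_eq [in RHS]eq_sym subr_eq addrC.
by ring.
Qed.

Lemma insupp (g : L) m : g@_m != 0 -> m \in msupp g.
Proof. by rewrite mcoeff_neq0. Qed.

Lemma lmulEr (f g : L) p :
  (lmul f g)@_p = \sum_(m <- msupp g) f@_(p - m) * g@_m.
Proof.
rewrite lmulE (conv (t := msupp g) (F := fun m => f@_m) (G := fun m => g@_m)) ?fset_uniq //.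
- by move=> m /insupp.
- by move=> m /insupp.
Qed.

Lemma lmul_monoL (al : M) (f : L) p : (lmul (lmono K al) f)@_p = f@_(p - al).
Proof.
rewrite lmulEr.
under eq_bigr => m _ do rewrite lmonoE mulrC.
have -> : \sum_(i <- msupp f) f@_i * (al == p - i)%:R =
          \sum_(i <- msupp f) f@_i * (i == p - al)%:R.
  apply: eq_bigr => i _; congr (_ * _%:R).
  by rewrite eq_sym subr_eq [in RHS]eq_sym subr_eq addrC.
rewrite (sum_pick (F := fun m => f@_m)) ?fset_uniq //.
by move=> /insupp.
Qed.

Lemma lmul_monoR (al : M) (f : L) p : (lmul f (lmono K al))@_p = f@_(p - al).
Proof.
rewrite lmulE.
under eq_bigr => m _ do rewrite lmonoE.
have -> : \sum_(i <- msupp f) f@_i * (al == p - i)%:R =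
          \sum_(i <- msupp f) f@_i * (i == p - al)%:R.
  apply: eq_bigr => i _; congr (_ * _%:R).
  by rewrite eq_sym subr_eq [in RHS]eq_sym subr_eq addrC.
rewrite (sum_pick (F := fun m => f@_m)) ?fset_uniq //.
by move=> /insupp.
Qed.

Lemma coef_sumZ (s : seq M) (mu : M -> K) (G : M -> L) p :
  (\sum_(d <- s) mu d *: G d)@_p = \sum_(d <- s) mu d * (G d)@_p.
Proof. by rewrite coef_sum; apply: eq_bigr => d _; rewrite mcoeffZ. Qed.

Definition co_def (i : 'I_n) (m : M) : K := (m ord0 i)%:~R.
Fact co_key : unit. Proof. by []. Qed.
Definition co := locked_with co_key co_def.
Lemma coE i m : co i m = (m ord0 i)%:~R. Proof. by rewrite /co unlock. Qed.

Lemma coD i m m' : co i (m + m') = co i m + co i m'.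
Proof. by rewrite !coE mxE intrD. Qed.
Lemma coN i m : co i (- m) = - co i m.
Proof. by rewrite !coE mxE intrN. Qed.
Lemma coB i m m' : co i (m - m') = co i m - co i m'.
Proof. by rewrite coD coN. Qed.

Lemma HopE i (f : L) p : (Hop i f)@_p = co i p * f@_p.
Proof.
rewrite /Hop coef_sum.
under eq_bigr => m _ do rewrite mcoeffZ lmonoE -coE.
rewrite (sum_pick (F := fun m => co i m * f@_m)) ?fset_uniq //.
by apply: contraR => /mcoeff_outdom ->; rewrite mulr0.
Qed.

Definition lam_def (w : 'I_n -> K) (q : M) : K := \sum_(i < n) w i * co i q.
Fact lam_key : unit. Proof. by []. Qed.
Definition lam := locked_with lam_key lam_def.
Lemma lamE w q : lam w q = \sum_(i < n) w i * co i q. Proof. by rewrite /lam unlock. Qed.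

Lemma lamD w q q' : lam w (q + q') = lam w q + lam w q'.
Proof. by rewrite !lamE -big_split; apply: eq_bigr => i _; rewrite coD mulrDr. Qed.
Lemma lamN w q : lam w (- q) = - lam w q.
Proof. by rewrite !lamE -sumrN; apply: eq_bigr => i _; rewrite coN mulrN. Qed.
Lemma lamB w q q' : lam w (q - q') = lam w q - lam w q'.
Proof. by rewrite lamD lamN. Qed.

Definition Eop_def (be : M) (w : 'I_n -> K) (f : L) : L :=
  \sum_(i < n) w i *: lmul (lmono K be) (Hop i f).
Fact Eop_key : unit. Proof. by []. Qed.
Definition Eop := locked_with Eop_key Eop_def.
Lemma EopD be w f : Eop be w f = \sum_(i < n) w i *: lmul (lmono K be) (Hop i f).
Proof. by rewrite /Eop unlock. Qed.

Lemma EopE be w f p : (Eop be w f)@_p = lam w (p - be) * f@_(p - be).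
Proof.
rewrite EopD coef_sum lamE mulr_suml; apply: eq_bigr => i _.
by rewrite mcoeffZ lmul_monoL HopE mulrA.
Qed.

Lemma HsumE (c : 'I_n -> K) (f : L) p :
  (\sum_(i < n) c i *: Hop i f)@_p = lam c p * f@_p.
Proof.
rewrite coef_sum lamE mulr_suml; apply: eq_bigr => i _.
by rewrite mcoeffZ HopE mulrA.
Qed.

Lemma Eop_der be w : is_derivation (Eop be w).
Proof.
split.
  move=> c f g; apply/malgP => p.
  by rewrite !(mcoeffD, mcoeffZ, EopE) mulrDr mulrCA.
move=> f g; apply/malgP => p.
rewrite (mcoeffD p) (EopE be w (lmul f g) p).
rewrite [in X in _ = X + _]lmulE [in X in _ = _ + X]lmulEr [in X in X = _]lmulE.
under [X in _ = X + _]eq_bigr => m _ do rewrite EopE (addrAC p).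
under [X in _ = _ + X]eq_bigr => m _ do rewrite EopE (addrAC p).
rewrite -(@conv (msupp f) (msupp g) (fun m => lam w m * f@_m) (fun m => g@_m) (p - be)) ?fset_uniq //; last first.
- by move=> m /insupp.
- by move=> m; apply: contraR => /mcoeff_outdom ->; rewrite mulr0.
rewrite mulr_sumr -big_split /=; apply: eq_bigr => m _.
have -> : lam w (p - be) = lam w (p - be - m) + lam w m by rewrite -lamD subrK.
by ring.
Qed.


Lemma malgU_scale (c : K) (m : M) : << c *g m >> = c *: lmono K m :> L.
Proof. by apply/malgP => p; rewrite mcoeffU mcoeffZ lmonoE mulr_natr. Qed.

Lemma lmono_mul (m m' : M) : lmul (lmono K m) (lmono K m') = lmono K (m + m').
Proof.
apply/malgP => p; rewrite lmul_monoL !lmonoE.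
by rewrite eq_sym subr_eq [in RHS]eq_sym addrC.
Qed.

Local Opaque lmul lmono.
Section Der.
Variable b : L -> L.
Hypothesis Db : is_derivation b.

Lemma b0 : b 0 = 0.
Proof.
have h := Db.1 1 0 0.
rewrite [in X in b X]scale1r [in X in b X]addr0 [in X in _ = X]scale1r in h.
by apply: (addrI (b 0)); rewrite [RHS]addr0 -h.
Qed.
Lemma bD (f g : L) : b (f + g) = b f + b g.
Proof. by have := Db.1 1 f g; rewrite [in X in b X]scale1r [in X in _ = X]scale1r. Qed.
Lemma bZ (c : K) (f : L) : b (c *: f) = c *: b f.
Proof.
have h := Db.1 c f 0.
by rewrite [in X in b X]addr0 b0 [in X in _ = X]addr0 in h.
Qed.
Lemma bsum (I : Type) (r : seq I) (F : I -> L) :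
  b (\sum_(i <- r) F i) = \sum_(i <- r) b (F i).
Proof.
elim: r => [|x r IH]; first by rewrite !big_nil b0.
by rewrite !big_cons bD IH.
Qed.

Lemma bexp (f : L) : b f = \sum_(m <- msupp f) f@_m *: b (lmono K m).
Proof.
rewrite {1}(monalgE f) bsum; apply: eq_bigr => m _.
by rewrite malgU_scale bZ.
Qed.

Definition phi (m q : M) : K := (b (lmono K m))@_(q + m).

Lemma Bsplit (m m' p : M) : (b (lmono K (m + m')))@_p =
  (b (lmono K m'))@_(p - m) + (b (lmono K m))@_(p - m').
Proof.
have h := Db.2 (lmono K m) (lmono K m').
rewrite (lmono_mul m m') in h.
rewrite [in X in X = _]h (mcoeffD p).
have e1 := lmul_monoL m (b (lmono K m')) p.
have e2 := lmul_monoR m' (b (lmono K m)) p.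
rewrite -e1 -e2.
done.
Qed.

Lemma phiD (m m' q : M) : phi (m + m') q = phi m q + phi m' q.
Proof.
rewrite /phi Bsplit.
have e1 : q + (m + m') - m = q + m' by rewrite addrCA addrC addrK.
have e2 : q + (m + m') - m' = q + m by rewrite addrA addrK.
by rewrite e1 e2; apply: addrC.
Qed.

Lemma phi0 (q : M) : phi 0 q = 0.
Proof. by apply: (addrI (phi 0 q)); rewrite -phiD !addr0. Qed.
Lemma phiN (m q : M) : phi (- m) q = - phi m q.
Proof. by apply: (addrI (phi m q)); rewrite -phiD !subrr phi0. Qed.
Lemma phiMn (m q : M) k : phi (m *+ k) q = phi m q *+ k.
Proof. by elim: k => [|k IH]; rewrite ?mulr0n ?phi0 // !mulrS phiD IH. Qed.
Lemma phiMz (m q : M) (z : int) : phi (m *~ z) q = z%:~R * phi m q.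
Proof.
rewrite mulrzl; case: z => k.
  by rewrite -!pmulrn phiMn.
by rewrite NegzE !mulrNz -!pmulrn phiN phiMn.
Qed.

Lemma phi_sum (I : Type) (r : seq I) (F : I -> M) q :
  phi (\sum_(i <- r) F i) q = \sum_(i <- r) phi (F i) q.
Proof.
elim: r => [|x r IH]; first by rewrite !big_nil phi0.
by rewrite !big_cons phiD IH.
Qed.

Lemma phi_dec (m q : M) : phi m q = \sum_(j < n) co j m * phi 'e_j q.
Proof.
rewrite {1}(row_sum_delta m) phi_sum; apply: eq_bigr => j _.
by rewrite -[m 0 j]intz scaler_int phiMz coE.
Qed.

Lemma Bcoef (m p : M) : (b (lmono K m))@_p = phi m (p - m).
Proof. by rewrite /phi subrK. Qed.

Definition tD : seq M := undup (flatten
  [seq [seq q - 'e_i | q <- (msupp (b (lmono K 'e_i)) : seq M)] | i <- enum 'I_n]).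
Definition wD (d : M) : 'I_n -> K := fun i => phi 'e_i d.

Lemma tD_mem i d : phi 'e_i d != 0 -> d \in tD.
Proof.
rewrite /phi => /insupp h; rewrite mem_undup; apply/flattenP.
exists [seq q - 'e_i | q <- (msupp (b (lmono K 'e_i)) : seq M)].
  by apply/mapP; exists i; rewrite ?mem_enum.
by apply/mapP; exists (d + 'e_i) => //; rewrite addrK.
Qed.

Lemma b_dec f : b f = \sum_(d <- tD) Eop d (wD d) f.
Proof.
apply/malgP => p.
rewrite (bexp f) coef_sum coef_sum.
transitivity (\sum_(j < n) \sum_(m <- msupp f) (f@_m * co j m) * phi 'e_j (p - m)).
  rewrite exchange_big /=; apply: eq_bigr => m _.
  rewrite mcoeffZ Bcoef phi_dec mulr_sumr; apply: eq_bigr => j _; by rewrite mulrA.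
transitivity (\sum_(j < n) \sum_(d <- tD) (f@_(p - d) * co j (p - d)) * phi 'e_j d).
  apply: eq_bigr => j _.
  apply: (@conv (msupp f) tD (fun m => f@_m * co j m) (fun d => phi 'e_j d) p).
  - exact: fset_uniq.
  - exact: undup_uniq.
  - by move=> m; apply: contraR => /mcoeff_outdom ->; rewrite mul0r.
  - by move=> d; apply: tD_mem.
rewrite exchange_big /=; apply: eq_bigr => d _.
rewrite EopE lamE mulr_suml; apply: eq_bigr => j _; rewrite /wD; ring.
Qed.

Lemma inHn_iter (c : 'I_n -> K) (a : L -> L)
  (ha : forall f, a f = \sum_(i < n) c i *: Hop i f) k f :
  iter k (ad a) b f = \sum_(d <- tD) (lam c d ^+ k) *: Eop d (wD d) f.
Proof.
elim: k f => [|k IH] f.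
  by rewrite /= b_dec; apply: eq_bigr => d _; rewrite expr0 scale1r.
rewrite iterS /ad /=; apply/malgP => p.
rewrite (mcoeffB p) (ha (iter k (ad a) b f)) HsumE !IH.
rewrite [X in _ * X - _ = _](coef_sumZ tD _ _ p) [X in _ - X = _](coef_sumZ tD _ _ p).
rewrite [X in _ = X](coef_sumZ tD _ _ p).
rewrite mulr_sumr -sumrB; apply: eq_bigr => d _.
rewrite [X in _ * (_ * X) - _ = _]EopE [X in _ - _ * X = _]EopE [X in _ = _ * X]EopE.
rewrite (ha f) HsumE (lamB c p d) exprS; ring.
Qed.

End Der.

Lemma lamMn w q k : lam w (q *+ k) = lam w q *+ k.
Proof. by elim: k => [|k IH]; rewrite ?mulr0n ?mulrS ?lamD ?IH //= lamE big1 // => i _; rewrite !coE mxE mulr0. Qed.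

Lemma iter_hom (c : 'I_n -> K) (al be : M) (a : L -> L)
  (ha : forall f, a f = Eop al c f) (fac : nat -> K)
  (hfac : forall k, fac k = lam c be + lam c al *+ k - lam c al) :
  forall k f q, (iter k (ad a) (Eop be c) f)@_(q + be + al *+ k) =
    (\prod_(j < k) fac j) * lam c q * f@_q.
Proof.
elim=> [|k IH] f q.
  by rewrite /= big_ord0 mulr0n addr0 EopE addrK mul1r.
rewrite iterS /ad /= (mcoeffB (q + be + al *+ k.+1)) (ha (iter k (ad a) (Eop be c) f)) EopE.
have e1 : q + be + al *+ k.+1 - al = q + be + al *+ k.
  by rewrite mulrS (addrC al) addrA addrK.
have e2 : q + be + al *+ k.+1 = q + al + be + al *+ k.
  by rewrite mulrS addrA (addrAC q be al).
rewrite e1 e2 !IH (ha f) EopE addrK big_ord_recr /= hfac.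
rewrite !lamD lamMn; ring.
Qed.

End Basics.

Lemma mxMn (n : nat) (v : 'rV[int]_n) k i : (v *+ k) ord0 i = v ord0 i *+ k.
Proof. by elim: k => [|k IH]; rewrite ?mulr0n ?mxE // !mulrS mxE IH. Qed.

Theorem lemma2p4 (n : nat) (K : fieldType) (charK0 : [pchar K] =i pred0)
  (a : laurent n K -> laurent n K) (Da : is_derivation a) :
  (homogeneous a /\ locally_finite a) <-> in_Hn a.
Proof.
split.
- move=> [[al [c ha]] lf].
  have ha' : forall f, a f = Eop al c f by move=> f; rewrite ha EopD.
  exists c => f.
  case: (eqVneq al 0) => [al0|alN0].
    by apply/malgP => p; rewrite ha' HsumE EopE al0 subr0.
  suff lam0 : forall q, lam c q = 0.
    by apply/malgP => p; rewrite ha' HsumE EopE !lam0 !mul0r.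
  move=> q0; apply/eqP; apply/negP => /negP hq0.
  pose la := lam c al.
  pose be := if la == 0 then q0 else al + al.
  pose fac k := lam c be + la *+ k - la.
  have facN0 : forall k, fac k != 0.
    move=> k; rewrite /fac /be; case: (eqVneq la 0) => [la0|laN0].
      by rewrite la0 mul0rn addr0 subr0.
    rewrite lamD -/la addrAC addrK -mulrS -mulr_natl mulf_neq0 //.
    by rewrite ((pcharf0P K).1 charK0).
  have hP : forall k, \prod_(j < k) fac j != 0.
    by move=> k; apply/prodf_neq0 => j _.
  have hit := @iter_hom n K c al be a ha' fac (fun k => erefl).
  have [d [S hS]] := lf (Eop be c) (Eop_der be c).
  pose g := lmono K q0.
  pose T := flatten [seq (msupp (S j g) : seq _) | j <- enum 'I_d].
  pose X k := q0 + be + al *+ k.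
  have XT : forall k, X k \in T.
    move=> k; have [lamk hk] := hS k.
    have : (iter k (ad a) (Eop be c) g)@_(X k) != 0.
      by rewrite hit /g lmonoE eqxx mulr1 mulf_neq0.
    rewrite hk coef_sum.
    apply: contraR => hX; apply/eqP; apply: big1 => j _.
    rewrite mcoeffZ mcoeff_outdom ?mulr0 //; apply: contra hX => hj.
    apply/flattenP; exists (msupp (S j g) : seq _) => //.
    by apply/mapP; exists j; rewrite ?mem_enum.
  have Xinj : injective X.
    move=> k1 k2; rewrite /X => /addrI h.
    case: (pickP (fun i => al ord0 i != 0)) => [i hi|h0].
      have := congr1 (fun v : 'rV[int]_n => v ord0 i) h; rewrite /= !mxMn.
      exact: (mulrIn hi).
    case/eqP: alN0; apply/matrixP => x y; rewrite (ord1 x) mxE.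
    by have := h0 y; move/negbFE/eqP.
  have : (size [seq X k | k <- iota 0 (size T).+1] <= size T)%N.
    apply: uniq_leq_size; first by rewrite map_inj_uniq ?iota_uniq.
    by move=> x /mapP [k _ ->]; apply: XT.
  by rewrite size_map size_iota ltnn.
- move=> [c ha]; split.
    exists 0, c => f; rewrite ha; apply/malgP => p.
    rewrite [X in X = _]HsumE; transitivity ((Eop 0 c f)@_p); first by rewrite EopE subr0.
    by rewrite EopD.
  move=> b' Db'.
  exists (size (tD b')), (fun j => Eop (tnth (in_tuple (tD b')) j) (wD b' (tnth (in_tuple (tD b')) j))).
  move=> k; exists (fun j => lam c (tnth (in_tuple (tD b')) j) ^+ k) => f.
  by rewrite (inHn_iter Db' ha) big_tnth.
Qed.
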